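(* Every M-set in a Minkowski space is countable.
   Context: A Minkowski space is a finite-dimensional real normed space $(X,\|\cdot\|)$. For a set $S\subseteq X$, its midpoint set is $M(S)=\{\tfrac12(x+y): x,y\in S,\ x\neq y\}$. A set $S\subseteq X$ is an M-set if every vector in $M(S)$ has norm exactly $1$ and every vector in $S$ has norm strictly greater than $1$. *)

(* Defs.v *)
From Stdlib Require Import Reals.
From Stdlib Require Fin.
Open Scope R_scope.

Definition vec (n : nat) := Fin.t n -> R.

Definition vadd {n : nat} (x y : vec n) : vec n := fun i => x i + y i.
Definition vscale {n : nat} (a : R) (x : vec n) : vec n := fun i => a * x i.
Definition vzero (n : nat) : vec n := fun _ => 0.

(* A norm on R^n.  Every finite-dimensional real normed space is linearly
   isometric to (R^n, N) for such a norm N, n = its dimension. *)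
Record is_norm {n : nat} (N : vec n -> R) : Prop := {
  norm_nonneg : forall x, 0 <= N x;
  norm_zero : forall x, N x = 0 -> x = vzero n;
  norm_scale : forall a x, N (vscale a x) = Rabs a * N x;
  norm_triangle : forall x y, N (vadd x y) <= N x + N y
}.

Definition midpoint_set {n : nat} (S : vec n -> Prop) : vec n -> Prop :=
  fun m => exists x y, S x /\ S y /\ x <> y /\ m = vscale (/ 2) (vadd x y).

Definition is_M_set {n : nat} (N : vec n -> R) (S : vec n -> Prop) : Prop :=
  (forall m, midpoint_set S m -> N m = 1) /\ (forall x, S x -> 1 < N x).

Definition countable_set {T : Type} (S : T -> Prop) : Prop :=
  exists f : T -> nat, forall x y, S x -> S y -> f x = f y -> x = y.

(* Main.v *)
Require Import Defs.
From Stdlib Require Import Reals Lra Lia Psatz List ZArith Cantor FunctionalExtensionality ClassicalEpsilon FinFun.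
Import ListNotations.
Open Scope R_scope.

Fixpoint fenum (n : nat) : list (Fin.t n) :=
  match n with 0%nat => [] | S m => Fin.F1 :: map Fin.FS (fenum m) end.

Lemma fenum_complete n (i : Fin.t n) : In i (fenum n).
Proof.
  induction i as [m|m i IH]; simpl; [now left|right]. now apply in_map.
Qed.

Lemma fenum_nodup n : NoDup (fenum n).
Proof.
  induction n; simpl; constructor.
  - intros H. apply in_map_iff in H. destruct H as [x [H _]]. discriminate.
  -
    apply FinFun.Injective_map_NoDup; [|exact IHn].
    intros a b H. now apply Fin.FS_inj.
Qed.

Section NormStuff.
Context {n : nat} (N : vec n -> R) (HN : is_norm N).

Definition ev (i : Fin.t n) : vec n := fun j => if Fin.eq_dec i j then 1 else 0.

Definition Qv (l : list (Fin.t n)) (v : vec n) : vec n :=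
  fold_right (fun i acc => vadd (vscale (v i) (ev i)) acc) (vzero n) l.

Lemma Qv_spec l v j : NoDup l ->
  Qv l v j = if in_dec Fin.eq_dec j l then v j else 0.
Proof.
  induction l as [|a l IH]; intros Hnd; simpl; [reflexivity|].
  inversion Hnd; subst. unfold vadd, vscale, ev at 1. rewrite IH by assumption.
  destruct (Fin.eq_dec a j) as [->|Hne].
  - destruct (in_dec Fin.eq_dec j l); [contradiction|].
    destruct (in_dec Fin.eq_dec j (j :: l)) as [_|H]; [ring|exfalso; apply H; now left].
  - destruct (in_dec Fin.eq_dec j l) as [Hi|Hi];
    destruct (in_dec Fin.eq_dec j (a :: l)) as [Hi'|Hi'].
    + ring.
    + exfalso; apply Hi'; now right.
    + destruct Hi' as [->|Hi']; [contradiction|contradiction].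
    + ring.
Qed.

Lemma Qv_full v : Qv (fenum n) v = v.
Proof.
  apply functional_extensionality; intro j.
  rewrite Qv_spec by apply fenum_nodup.
  destruct (in_dec Fin.eq_dec j (fenum n)) as [_|H]; [reflexivity|].
  exfalso; apply H, fenum_complete.
Qed.

Lemma N_zero : N (vzero n) = 0.
Proof.
  replace (vzero n) with (vscale 0 (vzero n)).
  - rewrite (norm_scale _ HN), Rabs_R0; ring.
  - apply functional_extensionality; intro; unfold vscale, vzero; ring.
Qed.

Lemma Qv_bound l v eps : (forall i, Rabs (v i) <= eps) ->
  N (Qv l v) <= eps * fold_right (fun i s => N (ev i) + s) 0 l.
Proof.
  intros Hv; induction l as [|a l IH]; simpl.
  - rewrite N_zero; lra.
  - eapply Rle_trans; [apply (norm_triangle _ HN)|].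
    rewrite (norm_scale _ HN).
    assert (Rabs (v a) * N (ev a) <= eps * N (ev a)).
    { apply Rmult_le_compat_r; [apply (norm_nonneg _ HN)|apply Hv]. }
    lra.
Qed.

Definition C0 := fold_right (fun i s => N (ev i) + s) 0 (fenum n).

Lemma C0_nonneg : 0 <= C0.
Proof.
  unfold C0; induction (fenum n); simpl; [lra|].
  pose proof (norm_nonneg _ HN (ev a)); lra.
Qed.

Lemma N_bound v eps : (forall i, Rabs (v i) <= eps) -> N v <= eps * C0.
Proof. intros H; rewrite <- (Qv_full v); now apply Qv_bound. Qed.

Definition vsub (x y : vec n) : vec n := vadd x (vscale (-1) y).

Lemma N_sym x y : N (vsub x y) = N (vsub y x).
Proof.
  replace (vsub x y) with (vscale (-1) (vsub y x)).
  - rewrite (norm_scale _ HN). replace (Rabs (-1)) with 1 by (rewrite Rabs_left by lra; lra); ring.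
  - apply functional_extensionality; intro; unfold vsub, vadd, vscale; ring.
Qed.

Lemma N_tri3 x y q : N (vsub x y) <= N (vsub x q) + N (vsub y q).
Proof.
  rewrite (N_sym y q).
  replace (vsub x y) with (vadd (vsub x q) (vsub q y)) by
    (apply functional_extensionality; intro; unfold vsub, vadd, vscale; ring).
  apply (norm_triangle _ HN).
Qed.

Lemma sep S (HS : is_M_set N S) x y : S x -> S y -> x <> y ->
  2 * (N x - 1) <= N (vsub x y).
Proof.
  intros Hx Hy Hne. destruct HS as [HM _].
  assert (Hm : N (vscale (/2) (vadd x y)) = 1) by (apply HM; exists x, y; auto).
  assert (E : x = vadd (vscale (/2) (vadd x y)) (vscale (/2) (vsub x y))).
  { apply functional_extensionality; intro; unfold vsub, vadd, vscale; field. }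
  pose proof (norm_triangle _ HN (vscale (/2) (vadd x y)) (vscale (/2) (vsub x y))) as T.
  rewrite <- E, Hm, (norm_scale _ HN) in T.
  rewrite Rabs_right in T by lra. lra.
Qed.

End NormStuff.

Lemma cinj a b : Cantor.to_nat a = Cantor.to_nat b -> a = b.
Proof. intro H. rewrite <- (Cantor.cancel_of_to a), <- (Cantor.cancel_of_to b). now rewrite H. Qed.

Definition zcode (z : Z) : nat := Cantor.to_nat (Z.to_nat z, Z.to_nat (- z)).
Lemma zcode_inj a b : zcode a = zcode b -> a = b.
Proof.
  unfold zcode; intro H. apply cinj in H. injection H; intros; lia.
Qed.

Fixpoint lcode (l : list Z) : nat :=
  match l with [] => 0%nat | a :: l => S (Cantor.to_nat (zcode a, lcode l)) end.
Lemma lcode_inj l1 l2 : lcode l1 = lcode l2 -> l1 = l2.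
Proof.
  revert l2; induction l1 as [|a l1 IH]; intros [|b l2]; cbn [lcode]; try discriminate; auto.
  intro H; apply Nat.succ_inj in H; apply cinj in H; rename H into H'. injection H'; intros H1 H2.
  f_equal; [now apply zcode_inj|now apply IH].
Qed.

Lemma map_eq_in {A B} (f g : A -> B) l i : map f l = map g l -> In i l -> f i = g i.
Proof.
  induction l; simpl; [tauto|]. intros H [->|Hi]; injection H; auto.
Qed.

Lemma up_bound r : 0 <= IZR (up r) - r <= 1.
Proof. destruct (archimed r); lra. Qed.

Theorem mainTheorem3 (n : nat) (N : vec n -> R) (HN : is_norm N)
  (S : vec n -> Prop) (HS : is_M_set N S) : countable_set S.
Proof.
  set (C := C0 N).
  assert (HC : 0 <= C) by (apply C0_nonneg; auto).
  set (kf := fun x : vec n => epsilon (inhabits 0%nat)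
               (fun k => (C + 1) / (INR k + 1) < N x - 1)).
  assert (Hk : forall x, 1 < N x -> (C + 1) / (INR (kf x) + 1) < N x - 1).
  { intros x Hx. unfold kf.
    apply (epsilon_spec (inhabits 0%nat) (fun k => (C + 1) / (INR k + 1) < N x - 1)).
    destruct (archimed ((C + 1) / (N x - 1))) as [H1 _].
    assert (Hp : 0 < (C + 1) / (N x - 1)) by (apply Rdiv_lt_0_compat; lra).
    exists (Z.to_nat (up ((C + 1) / (N x - 1)))).
    rewrite INR_IZR_INZ, Z2Nat.id by (apply le_IZR; lra).
    apply (Rmult_lt_reg_r (IZR (up ((C + 1) / (N x - 1))) + 1)); [lra|].
    unfold Rdiv; rewrite Rmult_assoc, Rinv_l, Rmult_1_r by lra.
    assert (E : (C + 1) = (C + 1) / (N x - 1) * (N x - 1)) by (field; lra).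
    rewrite E at 1. unfold Rdiv in *. nra. }
  set (qf := fun x : vec n => fun i => up ((INR (kf x) + 1) * x i)).
  exists (fun x => Cantor.to_nat (kf x, lcode (map (qf x) (fenum n)))).
  intros x y Hx Hy Hxy.
  apply cinj in Hxy.
  injection Hxy; intros Hl Hkk. apply lcode_inj in Hl.
  assert (Hq : qf x = qf y).
  { apply functional_extensionality; intro i.
    apply (map_eq_in _ _ (fenum n)); auto. apply fenum_complete. }
  destruct (Classical_Prop.classic (x = y)) as [|Hne]; [assumption|exfalso].
  set (M := INR (kf x) + 1).
  assert (HM : 0 < M) by (unfold M; pose proof (pos_INR (kf x)); lra).
  set (p := fun i => IZR (qf x i) / M).
  assert (Hap : forall z, kf z = kf x -> qf z = qf x -> N (vsub z p) <= / M * C).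
  { intros z Hz Hqz. apply N_bound; auto. intro i.
    unfold vsub, vadd, vscale, p. rewrite <- Hqz. unfold qf. rewrite Hz. fold M.
    pose proof (up_bound (M * z i)) as B.
    replace (z i + -1 * (IZR (up (M * z i)) / M)) with
      (- ((IZR (up (M * z i)) - M * z i) / M)) by (field; lra).
    rewrite Rabs_Ropp, Rabs_right.
    - unfold Rdiv; rewrite Rmult_comm; rewrite <- (Rmult_1_r (/ M)) at 2; apply Rmult_le_compat_l;
        [left; apply Rinv_0_lt_compat; lra|lra].
    - apply Rle_ge; unfold Rdiv; apply Rmult_le_pos; [lra|left; apply Rinv_0_lt_compat; lra]. }
  pose proof (Hap x eq_refl eq_refl) as A1.
  pose proof (Hap y (eq_sym Hkk) (eq_sym Hq)) as A2.
  pose proof (N_tri3 N HN x y p) as T.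
  pose proof (sep N HN S HS x y Hx Hy Hne) as Sp.
  destruct HS as [_ HS2].
  pose proof (Hk x (HS2 x Hx)) as K. fold M in K.
  assert (/ M * C < N x - 1).
  { eapply Rle_lt_trans; [|exact K]. unfold Rdiv.
    rewrite Rmult_comm. apply Rmult_le_compat_r; [left; apply Rinv_0_lt_compat; lra|lra]. }
  lra.
Qed.
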